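(* Let $k$ be a field, let $A$ be a $k$-algebra and let $K/k$ be a field extension. If $A\otimes_k K$ is just infinite over $K$, then $A$ is just infinite over $k$.
   Context: All rings are associative unital algebras over a field. A $k$-algebra $A$ is called just infinite if $\dim_k(A)=\infty$ and every nonzero two-sided ideal of $A$ has finite codimension in $A$. *)

(* Defs.v *)
From HB Require Import structures.
From mathcomp Require Import all_boot all_order all_algebra.
Set Implicit Arguments. Unset Strict Implicit. Unset Printing Implicit Defensive.
Import GRing.Theory.
Local Open Scope ring_scope.

Section LinearNotions.
Variables (R : fieldType) (V : lmodType R).

Definition spans (s : seq V) : Prop :=
  forall v : V, exists c : 'I_(size s) -> R, v = \sum_(i < size s) c i *: s`_i.

Definition findim : Prop := exists s : seq V, spans s.

Definition lin_indep (s : seq V) : Prop :=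
  forall c : 'I_(size s) -> R,
    \sum_(i < size s) c i *: s`_i = 0 -> forall i, c i = 0.
End LinearNotions.

Section Ideals.
Variables (R : fieldType) (A : algType R).

Definition two_sided_ideal (I : A -> Prop) : Prop :=
  [/\ I 0, (forall x y, I x -> I y -> I (x + y)),
      (forall a x, I x -> I (a * x)) & (forall a x, I x -> I (x * a))].

(* I has finite codimension in A: A/I is spanned by finitely many classes *)
Definition finite_codim (I : A -> Prop) : Prop :=
  exists s : seq A, forall a : A,
    exists c : 'I_(size s) -> R, I (a - \sum_(i < size s) c i *: s`_i).

Definition just_infinite : Prop :=
  ~ findim A /\
  forall I : A -> Prop, two_sided_ideal I -> (exists x, I x /\ x != 0) ->
    finite_codim I.
End Ideals.

(* (B, f) is the scalar extension A (x)_k K, where K is a field extension of k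
   via iota: f : A -> B is a k-algebra map (B viewed as k-algebra via iota)
   such that the induced K-linear map A (x)_k K -> B, a (x) c |-> c f(a),
   is bijective: surjective (the f(a) span B over K) and injective
   (k-linearly independent families go to K-linearly independent families). *)
Definition is_scalar_extension (k K : fieldType) (iota : {rmorphism k -> K})
    (A : algType k) (B : algType K) (f : A -> B) : Prop :=
  [/\ f 1 = 1,
      (forall x y, f (x * y) = f x * f y),
      (forall x y, f (x + y) = f x + f y)
    & (forall (c : k) x, f (c *: x) = iota c *: f x)] /\
  (forall b : B, exists s : seq A,
          exists c : 'I_(size s) -> K, b = \sum_(i < size s) c i *: f s`_i) /\
  (forall s : seq A, lin_indep s -> lin_indep (map f s)).

(* Main.v *)
Require Import Defs.
From HB Require Import structures.
From mathcomp Require Import all_boot all_order all_algebra.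
From Stdlib Require Import Classical.
Set Implicit Arguments. Unset Strict Implicit. Unset Printing Implicit Defensive.
Import GRing.Theory.
Local Open Scope ring_scope.

Definition ext (R : fieldType) n (c : 'I_n -> R) (m : nat) : R := oapp c 0 (insub m).
Lemma extE (R : fieldType) n (c : 'I_n -> R) (i : 'I_n) : ext c i = c i.
Proof. by rewrite /ext valK. Qed.

Section Span.
Variables (R : fieldType) (V : lmodType R).
Definition inspan (s : seq V) (v : V) :=
  exists c : nat -> R, v = \sum_(i < size s) c i *: s`_i.

Lemma span0 s : inspan s 0.
Proof. by exists (fun _ => 0); rewrite big1 // => i _; rewrite scale0r. Qed.

Lemma spanD s v w : inspan s v -> inspan s w -> inspan s (v + w).
Proof.
case=> c -> [d ->]; exists (fun n => c n + d n).
by rewrite -big_split /=; apply: eq_bigr => i _; rewrite scalerDl.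
Qed.

Lemma spanZ s a v : inspan s v -> inspan s (a *: v).
Proof.
case=> c ->; exists (fun n => a * c n).
by rewrite scaler_sumr; apply: eq_bigr => i _; rewrite scalerA.
Qed.

Lemma span_sum s n (F : 'I_n -> V) : (forall i, inspan s (F i)) -> inspan s (\sum_(i < n) F i).
Proof.
elim: n F => [|n IH] F h; first by rewrite big_ord0; apply: span0.
by rewrite big_ord_recr /=; apply: spanD; [apply: IH|].
Qed.

Lemma span_cons x s v : inspan (x :: s) v <-> exists a w, inspan s w /\ v = a *: x + w.
Proof.
split.
- case=> c ->; exists (c 0%N), (\sum_(i < size s) c i.+1 *: s`_i); split.
    by exists (fun n => c n.+1).
  by rewrite big_ord_recl /=.
- case=> a [w [[c ->] ->]]; exists (fun n => if n is n'.+1 then c n' else a).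
  by rewrite big_ord_recl /=.
Qed.

Lemma span_mem s x : x \in s -> inspan s x.
Proof.
elim: s => // y s IH; rewrite inE => /orP [/eqP -> | hx]; apply/span_cons.
  by exists 1, 0; split; [apply: span0 | rewrite scale1r addr0].
by exists 0, x; split; [apply: IH | rewrite scale0r add0r].
Qed.

Lemma span_cat s1 s2 v : inspan (s1 ++ s2) v ->
  exists v1 v2, inspan s1 v1 /\ inspan s2 v2 /\ v = v1 + v2.
Proof.
elim: s1 v => [|x s1 IH] v /=.
  by move=> h; exists 0, v; split; [apply: span0 | split; last rewrite add0r].
move/span_cons => [a [w [hw ->]]].
have [v1 [v2 [h1 [h2 ->]]]] := IH _ hw.
exists (a *: x + v1), v2; split; last by split; last rewrite addrA.
by apply/span_cons; exists a, v1.
Qed.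

Lemma lin_indep_nat (s : seq V) : lin_indep s -> forall c : nat -> R,
  \sum_(i < size s) c i *: s`_i = 0 -> forall i : nat, (i < size s)%N -> c i = 0.
Proof. by move=> li c h i hi; exact: (li (fun j => c j) h (Ordinal hi)). Qed.

Lemma indep_cons x s : lin_indep s -> ~ inspan s x -> lin_indep (x :: s).
Proof.
move=> li nx c; rewrite big_ord_recl /= => h.
have h' : c ord0 *: x + \sum_(i < size s) c (lift ord0 i) *: s`_i = 0 by [].
have c0 : c ord0 = 0.
  apply/eqP; apply: contraT => cn0; exfalso; apply: nx.
  exists (fun n => - (c ord0)^-1 * ext c n.+1).
  have -> : x = (c ord0)^-1 *: (c ord0 *: x) by rewrite scalerA mulVf // scale1r.
  have -> : c ord0 *: x = - \sum_(i < size s) c (lift ord0 i) *: s`_i.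
    by apply/eqP; rewrite -subr_eq0 opprK h'.
  rewrite scalerN scaler_sumr -sumrN; apply: eq_bigr => i _.
  by rewrite scalerA -scaleNr mulNr -(lift0 i) extE.
have hs : \sum_(i < size s) c (lift ord0 i) *: s`_i = 0.
  by move: h'; rewrite c0 scale0r add0r.
have cl : forall i : 'I_(size s), c (lift ord0 i) = 0 := li _ hs.
by move=> i; case: (unliftP ord0 i) => [j ->|->].
Qed.

Lemma indep_cons_notin x s : lin_indep (x :: s) -> ~ inspan s x.
Proof.
move=> li [c hx].
have := li (fun i => if val i is n.+1 then c n else -1).
rewrite big_ord_recl /=.
have -> : \sum_(i < size s) (if val (lift ord0 i) is n.+1 then c n else -1) *: (x :: s)`_(lift ord0 i)
   = \sum_(i < size s) c i *: s`_i.
  by apply: eq_bigr => i _; rewrite lift0.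
rewrite -hx scaleN1r addNr => /(_ erefl ord0) /eqP.
by rewrite oppr_eq0 oner_eq0.
Qed.

Lemma span_gen_dummy : True. Proof. by []. Qed.
End Span.

Lemma span_gen (R S : fieldType) (U : lmodType R) (W : lmodType S) (sigma : R -> S)
  (g : U -> W) (t : seq U) (u : seq W) v :
  (forall x y, g (x + y) = g x + g y) -> (forall c x, g (c *: x) = sigma c *: g x) ->
  (forall x, x \in t -> inspan u (g x)) -> inspan t v -> inspan u (g v).
Proof.
move=> gD gZ ht [c ->].
have g0 : g 0 = 0 by apply/(addrI (g 0)); rewrite -gD !addr0.
rewrite (big_morph g gD g0); apply: span_sum => i; rewrite gZ; apply: spanZ.
by apply: ht; apply: mem_nth.
Qed.

Lemma span_trans (R : fieldType) (U : lmodType R) (t u : seq U) v :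
  (forall x, x \in t -> inspan u x) -> inspan t v -> inspan u v.
Proof.
by apply: (@span_gen R R U U id id) => // c x.
Qed.

Lemma span_sub (R : fieldType) (U : lmodType R) (t u : seq U) v :
  {subset t <= u} -> inspan t v -> inspan u v.
Proof. by move=> h; apply: span_trans => x /h; apply: span_mem. Qed.

Lemma basis (R : fieldType) (V : lmodType R) (s : seq V) : exists y : seq V,
  lin_indep y /\ (forall z, z \in y -> inspan s z) /\ (forall z, z \in s -> inspan y z).
Proof.
elim: s => [|v s [y [yi [ys sy]]]].
  exists [::]; split; last by split.
  by move=> c _ i; have := ltn_ord i.
have sub1 : {subset s <= v :: s} by move=> z hz; rewrite inE hz orbT.
case: (classic (inspan y v)) => hv.
  exists y; split=> //; split=> z.
    by move/ys; apply: span_sub.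
  by rewrite inE => /orP [/eqP -> | /sy].
exists (v :: y); split; first exact: indep_cons.
have sub2 : {subset y <= v :: y} by move=> z hz; rewrite inE hz orbT.
split=> z; rewrite inE => /orP [/eqP -> | hz]; try (apply: span_mem; exact: mem_head).
  by apply: span_sub (ys _ hz).
by apply: span_sub (sy _ hz).
Qed.

Lemma ideal_span (k : fieldType) (A : algType k) (I : A -> Prop) (y : seq A) v :
  two_sided_ideal I -> (forall z, z \in y -> I z) -> inspan y v -> I v.
Proof.
move=> [I0 ID IL IR] hy [c ->].
have hsum : forall n (F : 'I_n -> A), (forall i, I (F i)) -> I (\sum_(i < n) F i).
  elim=> [|n IH] F hF; first by rewrite big_ord0.
  by rewrite big_ord_recr /=; apply: ID; [apply: IH|].
apply: hsum => i; rewrite -[y`_i]mul1r scalerAl; apply: IL; apply: hy.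
exact: mem_nth.
Qed.

Unset Implicit Arguments.
Theorem lemma5p2 (k K : fieldType) (iota : {rmorphism k -> K})
    (A : algType k) (B : algType K) (f : A -> B) :
  is_scalar_extension iota f -> just_infinite B -> just_infinite A.
Proof.
move=> [[f1 fM fD fZ] [fsurj finj]] [nfB idB].
have fspan : forall s a, inspan s a -> inspan (map f s) (f a).
  move=> s a; apply: span_gen fD fZ _ => x hx; apply: span_mem; exact: map_f.
have surj : forall b, exists s, inspan (map f s) b.
  move=> b; have [s [c ->]] := fsurj b; exists s, (ext c).
  rewrite size_map; apply: eq_bigr => i _; rewrite extE (nth_map 0) //.
have surjT : forall t : seq B, exists S, forall x, x \in t -> inspan (map f S) x.
  elim=> [|b t [S hS]]; first by exists [::].
  have [S' hS'] := surj b; exists (S' ++ S) => x; rewrite inE => /orP [/eqP -> | /hS].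
    by apply: span_sub hS' => z; rewrite map_cat mem_cat => ->.
  by apply: span_sub => z; rewrite map_cat mem_cat orbC => ->.
have keyL : forall u a, inspan (map f u) (f a) -> inspan u a.
  move=> u a ha; have [y [yi [yu uy]]] := basis u.
  case: (classic (inspan y a)) => hy; first exact: span_trans yu hy.
  have := finj _ (indep_cons yi hy); rewrite /= => /indep_cons_notin; case.
  apply: span_trans ha => w /mapP [z hz ->]; exact: fspan (uy _ hz).
split.
  move=> [s hs]; apply: nfB; exists (map f s) => b.
  have [s' hb] := surj b.
  have : inspan (map f s) b.
    apply: span_trans hb => w /mapP [z _ ->]; apply: fspan.
    by have [c ->] := hs z; exists (ext c); apply: eq_bigr => i _; rewrite extE.
  by case=> c ->; exists (fun i => c i).
move=> I Iid [x [Ix xn0]]; have [I0 ID IL IR] := Iid.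
pose J := fun b => exists y, (forall z, z \in y -> I z) /\ inspan (map f y) b.
have Jid : two_sided_ideal J.
  split.
  - by exists [::]; split=> //; apply: span0.
  - move=> b1 b2 [y1 [h1 s1]] [y2 [h2 s2]]; exists (y1 ++ y2); split.
      by move=> z; rewrite mem_cat => /orP [/h1|/h2].
    apply: spanD; apply: span_sub; try eassumption; move=> z; rewrite map_cat mem_cat => ->; 
      by rewrite ?orbT.
  - move=> b v [y [hy sv]]; have [S' hS'] := surj b.
    exists [seq s * z | s <- S', z <- y]; split.
      by move=> w /allpairsP [[s z] [_ hz ->]]; apply: IL; apply: hy.
    apply: (@span_gen K K B B id (fun b => b * v)) hS'.
    + by move=> ? ?; rewrite mulrDl.
    + by move=> ? ?; rewrite scalerAl.
    move=> w /mapP [s hs ->].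
    apply: (@span_gen K K B B id (fun z => f s * z)) sv.
    + by move=> ? ?; rewrite mulrDr.
    + by move=> ? ?; rewrite scalerAr.
    move=> w' /mapP [z hz ->]; rewrite -fM; apply: span_mem; apply: map_f.
    by apply: allpairs_f.
  - move=> b v [y [hy sv]]; have [S' hS'] := surj b.
    exists [seq z * s | s <- S', z <- y]; split.
      by move=> w /allpairsP [[s z] [_ hz ->]]; apply: IR; apply: hy.
    apply: (@span_gen K K B B id (fun b => v * b)) hS'.
    + by move=> ? ?; rewrite mulrDr.
    + by move=> ? ?; rewrite scalerAr.
    move=> w /mapP [s hs ->].
    apply: (@span_gen K K B B id (fun z => z * f s)) sv.
    + by move=> ? ?; rewrite mulrDl.
    + by move=> ? ?; rewrite scalerAl.
    move=> w' /mapP [z hz ->]; rewrite -fM; apply: span_mem; apply: map_f.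
    by apply: (allpairs_f (fun s z => z * s)).
have Jnz : exists b, J b /\ b != 0.
  exists (f x); split.
    exists [:: x]; split; first by move=> z; rewrite inE => /eqP ->.
    by apply: span_mem; rewrite mem_head.
  apply/eqP => fx0.
  have li : lin_indep [:: x].
    move=> c; rewrite big_ord1 => /eqP; rewrite scaler_eq0 (negbTE xn0) orbF => /eqP c0 i.
    by rewrite (ord1 i).
  have := finj _ li (fun _ => 1); rewrite /= big_ord1 /= scale1r fx0 => /(_ erefl ord0) /eqP.
  by rewrite oner_eq0.
have [t ht] := idB J Jid Jnz.
have [S hS] := surjT t.
exists S => a; have [c [y [hy hJ]]] := ht (f a).
have : inspan (map f (S ++ y)) (f a).
  rewrite -(subrK (\sum_(i < size t) c i *: t`_i) (f a)); apply: spanD.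
    by apply: span_sub hJ => z; rewrite map_cat mem_cat orbC => ->.
  apply: span_sum => i; apply: spanZ; apply: span_sub (hS _ (mem_nth 0 (ltn_ord i))).
  by move=> z; rewrite map_cat mem_cat => ->.
move/keyL/span_cat => [v1 [v2 [[d ->] [h2 ->]]]]; exists (fun i => d i).
by rewrite [_ + v2]addrC addrK; apply: ideal_span Iid hy h2.
Qed.
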